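(* Fix $b>0$, $c>0$, $\theta>0$ with $\theta<c\le2\theta$ and $b\ge c^2/2$, and let $a>0$ vary with $\zeta(a):=\frac{b^2-a(c-\theta)}{a^2}<0$ (the mixed-equilibrium region). Define $$\bar a_M=\frac{\Bigl(b+c^2-3c\theta+2\theta^2+\sqrt{b\,(b-2c\theta+2\theta^2)}\Bigr)b^2}{(c-\theta)^3}.$$ Then $\bar a_M\ge\frac{2b^2}{c-\theta}$, and for every $a\le\bar a_M$ in the mixed-equilibrium region the truncated contest admits an on-domain mixed equilibrium; one such equilibrium is given by both players using the following two-point distribution: if $a\le\frac{2b^2}{c-\theta}$, probability $\tfrac12$ on each of $\kappa-s$ and $\kappa+s$ where $\kappa=b/a$, $s=\sqrt{-\zeta}$; if $a\ge\frac{2b^2}{c-\theta}$, probability $1-p$ on $0$ and $p$ on $z$, where $z=\frac{c-\theta}{b}$, $p=\frac{b^2}{a(c-\theta)}$. In particular, the set of $a$ for which an on-domain mixed equilibrium exists is nonempty.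
   Context: Let $P(x,y)=\tfrac12+(x-y)\bigl(c-b(x+y)+axy\bigr)$ and $\bar P=\min\{1,\max\{0,P\}\}$. The truncated contest is the two-player complete-information game with efforts $x,y\ge0$ and payoffs $\bar P(x,y)-\theta x$ for $X$ and $1-\bar P(x,y)-\theta y$ for $Y$, mixed strategies allowed. An equilibrium is on-domain if $0\le P(x,y)\le1$ (so $\bar P=P$) for all pairs $(x,y)$ in the product of the supports of the equilibrium strategies. A mixed equilibrium is one in which some player uses a nondegenerate distribution. *)

(* Defs.v *)
From Stdlib Require Import Reals Lra List.
Import ListNotations.
Open Scope R_scope.

Definition Pc (a b c x y : R) : R :=
  1/2 + (x - y) * (c - b * (x + y) + a * x * y).

Definition Pbar (a b c x y : R) : R := Rmin 1 (Rmax 0 (Pc a b c x y)).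

(* A (finitely supported) mixed strategy: list of (effort, probability). *)
Definition dist := list (R * R).

Definition total_prob (d : dist) : R :=
  fold_right (fun xp acc => snd xp + acc) 0 d.

Definition valid_dist (d : dist) : Prop :=
  (forall xp, In xp d -> 0 <= fst xp /\ 0 <= snd xp) /\ total_prob d = 1.

Definition expect2 (f : R -> R -> R) (dX dY : dist) : R :=
  fold_right (fun xp acc =>
    fold_right (fun yq acc' => snd xp * snd yq * f (fst xp) (fst yq) + acc') 0 dY
    + acc) 0 dX.

Definition payX (a b c th : R) (dX dY : dist) : R :=
  expect2 (fun x y => Pbar a b c x y - th * x) dX dY.
Definition payY (a b c th : R) (dX dY : dist) : R :=
  expect2 (fun x y => 1 - Pbar a b c x y - th * y) dX dY.

Definition is_equilibrium (a b c th : R) (dX dY : dist) : Prop :=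
  valid_dist dX /\ valid_dist dY /\
  (forall d, valid_dist d -> payX a b c th d dY <= payX a b c th dX dY) /\
  (forall d, valid_dist d -> payY a b c th dX d <= payY a b c th dX dY).

Definition in_support (d : dist) (x : R) : Prop :=
  exists p, In (x, p) d /\ 0 < p.

Definition on_domain (a b c : R) (dX dY : dist) : Prop :=
  forall x y, in_support dX x -> in_support dY y ->
    0 <= Pc a b c x y <= 1.

Definition degenerate (d : dist) : Prop :=
  exists x0, forall x, in_support d x -> x = x0.

Definition mixed_profile (dX dY : dist) : Prop :=
  ~ degenerate dX \/ ~ degenerate dY.

Definition zeta (a b c th : R) : R := (b ^ 2 - a * (c - th)) / a ^ 2.

Definition abarM (b c th : R) : R :=
  (b + c ^ 2 - 3 * c * th + 2 * th ^ 2 + sqrt (b * (b - 2 * c * th + 2 * th ^ 2)))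
  * b ^ 2 / (c - th) ^ 3.

Definition sym_dist (a b c th : R) : dist :=
  let kappa := b / a in let s := sqrt (- zeta a b c th) in
  [(kappa - s, 1/2); (kappa + s, 1/2)].

Definition zero_dist (a b c th : R) : dist :=
  let z := (c - th) / b in let p := b ^ 2 / (a * (c - th)) in
  [(0, 1 - p); (z, p)].

(* Main.v *)
Require Import Defs.
From Stdlib Require Import Reals Lra Lia Psatz List.
Import ListNotations.
Open Scope R_scope.

Definition sumL (d : list (R*R)) (F : R -> R) : R :=
  fold_right (fun xp acc => snd xp * F (fst xp) + acc) 0 d.

Lemma sumL_ext d F G : (forall x, F x = G x) -> sumL d F = sumL d G.
Proof. intros H; induction d as [|[x p] d IH]; simpl; auto. rewrite H, IH; auto. Qed.

Lemma sumL_lin d p1 p2 A B :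
  sumL d (fun y => p1 * A y + p2 * B y) = p1 * sumL d A + p2 * sumL d B.
Proof. induction d as [|[x p] d IH]; simpl; [ring|]. rewrite IH; ring. Qed.

Lemma expect2_r f d y1 q1 y2 q2 :
  expect2 f d [(y1,q1);(y2,q2)] = sumL d (fun x => q1 * f x y1 + q2 * f x y2).
Proof. induction d as [|[x p] d IH]; [unfold expect2; simpl; ring|].
  unfold expect2 in *; simpl in *. rewrite IH; ring. Qed.

Lemma fold_inner p (x : R) (f : R -> R -> R) (d : list (R*R)) :
  fold_right (fun yq acc => p * snd yq * f x (fst yq) + acc) 0 d = p * sumL d (fun y => f x y).
Proof. induction d as [|[y q] d IH]; simpl; [ring|]. rewrite IH; ring. Qed.

Lemma expect2_l f x1 p1 x2 p2 d :
  expect2 f [(x1,p1);(x2,p2)] d = sumL d (fun y => p1 * f x1 y + p2 * f x2 y).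
Proof.
  unfold expect2; simpl. rewrite !fold_inner.
  rewrite (sumL_lin d p1 p2 (fun y => f x1 y) (fun y => f x2 y)). ring.
Qed.

Lemma sumL_bound d F V : valid_dist d -> (forall x, 0 <= x -> F x <= V) -> sumL d F <= V.
Proof.
  intros [Hd Ht] HF.
  assert (forall d, (forall xp, In xp d -> 0 <= fst xp /\ 0 <= snd xp) -> sumL d F <= V * total_prob d).
  { clear Hd Ht. induction d0 as [|[x p] d0 IH]; intros H; simpl; [lra|].
    destruct (H (x,p)) as [H1 H2]; [left; auto|]. simpl in H1, H2.
    assert (sumL d0 F <= V * total_prob d0) by (apply IH; intros; apply H; right; auto).
    assert (p * F x <= p * V) by (apply Rmult_le_compat_l; auto).
    unfold total_prob in *. simpl. nra. }
  rewrite <- (Rmult_1_r V), <- Ht. apply H; auto.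
Qed.

Definition clip (t : R) := Rmin 1 (Rmax 0 t).

Lemma clip_sym t : clip (1 - t) = 1 - clip t.
Proof. unfold clip, Rmin, Rmax; repeat destruct Rle_dec; lra. Qed.

Lemma clip_id t : 0 <= t <= 1 -> clip t = t.
Proof. unfold clip, Rmin, Rmax; repeat destruct Rle_dec; lra. Qed.

Lemma clip_key q1 q2 P1 P2 : 0 <= q1 -> 0 <= q2 -> q1 + q2 = 1 ->
  (P1 < 0 -> q2 <= q1*P1 + q2*P2) -> (P2 < 0 -> q1 <= q1*P1+q2*P2) ->
  q1 * clip P1 + q2 * clip P2 <= q1*P1 + q2*P2.
Proof.
  intros h1 h2 h3 H1 H2.
  assert (c0: forall t, 0 <= clip t <= 1) by (intros; unfold clip, Rmin, Rmax; repeat destruct Rle_dec; lra).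
  assert (cn: forall t, t < 0 -> clip t = 0) by (intros; unfold clip, Rmin, Rmax; repeat destruct Rle_dec; lra).
  assert (cp: forall t, 0 <= t -> clip t <= t) by (intros; unfold clip, Rmin, Rmax; repeat destruct Rle_dec; lra).
  destruct (Rlt_or_le P1 0) as [a1|a1].
  - rewrite (cn _ a1). specialize (H1 a1). pose proof (c0 P2). nra.
  - destruct (Rlt_or_le P2 0) as [a2|a2].
    + rewrite (cn _ a2). specialize (H2 a2). pose proof (c0 P1). nra.
    + pose proof (cp _ a1); pose proof (cp _ a2). nra.
Qed.

Lemma Pbar_clip a b c x y : Pbar a b c x y = clip (Pc a b c x y).
Proof. reflexivity. Qed.

Lemma Pc_swap a b c x y : Pc a b c y x = 1 - Pc a b c x y.
Proof. unfold Pc; field. Qed.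

Lemma Pc_diag a b c x : Pc a b c x x = 1/2.
Proof. unfold Pc; ring. Qed.

Lemma generic a b c th y1 y2 q1 q2 :
 0 <= y1 -> 0 <= y2 -> 0 < q1 -> 0 < q2 -> q1 + q2 = 1 -> y1 <> y2 ->
 b = a*(q1*y1+q2*y2) -> c = th + a*(q1*y1^2+q2*y2^2) ->
 0 <= Pc a b c y1 y2 <= 1 ->
 (forall x, 0<=x -> Pc a b c x y1 < 0 -> q2 <= 1/2 + th*(x - (q1*y1+q2*y2))) ->
 (forall x, 0<=x -> Pc a b c x y2 < 0 -> q1 <= 1/2 + th*(x - (q1*y1+q2*y2))) ->
 is_equilibrium a b c th [(y1,q1);(y2,q2)] [(y1,q1);(y2,q2)] /\
 on_domain a b c [(y1,q1);(y2,q2)] [(y1,q1);(y2,q2)] /\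
 mixed_profile [(y1,q1);(y2,q2)] [(y1,q1);(y2,q2)].
Proof.
  intros hy1 hy2 hq1 hq2 hq hne Hb Hc Hd H1 H2.
  set (m1 := q1*y1+q2*y2) in *.
  assert (Hid: forall x, q1*Pc a b c x y1 + q2*Pc a b c x y2 = 1/2 - th*m1 + th*x).
  { intros x. rewrite Hb, Hc. unfold m1, Pc. replace q2 with (1-q1) by lra. field. }
  assert (Hon: forall x y, (x = y1 \/ x = y2) -> (y=y1\/y=y2) -> 0 <= Pc a b c x y <= 1).
  { intros x y [-> | ->] [-> | ->]; rewrite ?Pc_diag; try lra.
    rewrite Pc_swap; lra. }
  set (F := fun x => q1*(Pbar a b c x y1 - th*x) + q2*(Pbar a b c x y2 - th*x)).
  set (V := 1/2 - th*m1).
  assert (HF: forall x, 0 <= x -> F x <= V).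
  { intros x hx. unfold F, V. rewrite !Pbar_clip.
    pose proof (clip_key q1 q2 (Pc a b c x y1) (Pc a b c x y2)) as K.
    rewrite Hid in K. specialize (H1 x hx); specialize (H2 x hx).
    assert (q1 * clip (Pc a b c x y1) + q2 * clip (Pc a b c x y2) <= 1/2 - th*m1 + th*x) by (apply K; lra).
    nra. }
  assert (HFy: forall x, (x = y1 \/ x = y2) -> F x = V).
  { intros x hx. unfold F, V. rewrite !Pbar_clip, !clip_id by (apply Hon; auto).
    pose proof (Hid x). nra. }
  assert (Hval: valid_dist [(y1,q1);(y2,q2)]).
  { split. intros xp [E|[E|[]]]; subst xp; simpl; lra. unfold total_prob; simpl; lra. }
  assert (HXX: payX a b c th [(y1,q1);(y2,q2)] [(y1,q1);(y2,q2)] = V).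
  { unfold payX. rewrite expect2_r. simpl. fold (F y1). fold (F y2).
    rewrite !HFy by auto. nra. }
  assert (HYl: forall d, payY a b c th [(y1,q1);(y2,q2)] d = sumL d F).
  { intros d. unfold payY. rewrite expect2_l. apply sumL_ext. intros y. unfold F.
    rewrite !Pbar_clip, (Pc_swap a b c y1 y), (Pc_swap a b c y2 y), !clip_sym. ring. }
  split; [|split].
  - split; [auto|split; [auto|split]].
    + intros d hd. rewrite HXX. unfold payX. rewrite expect2_r. apply sumL_bound; auto.
    + intros d hd. rewrite !HYl. simpl. rewrite !HFy by auto.
      replace (q1 * V + (q2 * V + 0)) with V by nra. apply sumL_bound; auto.
  - intros x y [p [hx hp]] [p' [hy hp']]. apply Hon.
    + destruct hx as [E|[E|[]]]; inversion E; auto.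
    + destruct hy as [E|[E|[]]]; inversion E; auto.
  - left. intros [x0 Hx0]. apply hne.
    rewrite (Hx0 y1), (Hx0 y2); auto.
    + exists q2; split; [right; left; auto|auto].
    + exists q1; split; [left; auto|auto].
Qed.

Lemma sym_core a b c th k s : 0<a -> 0<s -> s<=k -> 0<th -> b = a*k ->
  c = th + a*(k^2+s^2) -> a*(k^2+s^2) <= th -> 2*b >= c^2 ->
 is_equilibrium a b c th [(k-s,1/2);(k+s,1/2)] [(k-s,1/2);(k+s,1/2)] /\
 on_domain a b c [(k-s,1/2);(k+s,1/2)] [(k-s,1/2);(k+s,1/2)] /\
 mixed_profile [(k-s,1/2);(k+s,1/2)] [(k-s,1/2);(k+s,1/2)].
Proof.
  intros ha hs hsk hth Hb Hc He Hbc.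
  assert (P0: forall y, 0 <= 1/2 - c*y + b*y^2).
  { intros y. assert (0 < b) by (rewrite Hb; apply Rmult_lt_0_compat; lra).
    assert (0 <= (2*b*y - c)^2) by apply pow2_ge_0.
    apply Rmult_le_reg_l with (4*b); [lra|]. nra. }
  apply generic; try lra.
  - assert (E: Pc a b c (k-s) (k+s) = 1/2 - 2*s*th) by (unfold Pc; rewrite Hb, Hc; field).
    rewrite E.
    assert (2*k*s <= k^2+s^2) by (pose proof (pow2_ge_0 (k-s)); nra).
    assert (4*th*(a*(k^2+s^2)) <= c^2) by (rewrite Hc; pose proof (pow2_ge_0 (th - a*(k^2+s^2))); nra).
    assert (0 < a*(k^2+s^2)).
    { apply Rmult_lt_0_compat; [lra|]. pose proof (pow2_ge_0 k). assert (0 < s^2) by (apply pow_lt; lra). lra. }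
    assert (th*s*(4*(a*(k^2+s^2))) <= 1 * (a*(k^2+s^2))).
    { assert (s * (4*th*(a*(k^2+s^2))) <= s * c^2) by (apply Rmult_le_compat_l; lra).
      assert (s * c^2 <= s * (2*b)) by (apply Rmult_le_compat_l; lra).
      assert (a*(2*k*s) <= a*(k^2+s^2)) by (apply Rmult_le_compat_l; lra).
      rewrite Hb in *. nra. }
    assert (th*s <= 1/4).
    { apply Rmult_le_reg_r with (4*(a*(k^2+s^2))); nra. }
    assert (0 < th*s) by (apply Rmult_lt_0_compat; lra).
    replace (2*s*th) with (2*(th*s)) by ring. lra.
  - intros x hx HP. destruct (Rle_or_lt k x) as [hk|hk]; [nra|exfalso].
    assert (E: Pc a b c x (k-s) = (1/2 - c*(k-s) + b*(k-s)^2) + x*(th + 2*a*k*s - a*s*x))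
      by (unfold Pc; rewrite Hb, Hc; field).
    pose proof (P0 (k-s)). assert (0 <= x*(th + 2*a*k*s - a*s*x)).
    { apply Rmult_le_pos; auto. assert (0 <= a*s*(2*k - x)) by (apply Rmult_le_pos; [apply Rmult_le_pos; lra | lra]).
      replace (th + 2*a*k*s - a*s*x) with (th + a*s*(2*k-x)) by ring. lra. }
    lra.
  - intros x hx HP. destruct (Rle_or_lt k x) as [hk|hk]; [nra|exfalso].
    assert (E: Pc a b c x (k+s) = (1/2 - c*(k+s) + b*(k+s)^2) + x*(th - 2*a*k*s + a*s*x))
      by (unfold Pc; rewrite Hb, Hc; field).
    pose proof (P0 (k+s)). assert (0 <= x*(th - 2*a*k*s + a*s*x)).
    { apply Rmult_le_pos; auto. assert (a*(2*k*s) <= a*(k^2+s^2)).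
      { apply Rmult_le_compat_l; [lra|]. pose proof (pow2_ge_0 (k-s)); nra. }
      assert (0 <= a*s*x) by (apply Rmult_le_pos; [apply Rmult_le_pos; lra | lra]).
      replace (th - 2*a*k*s + a*s*x) with (th - a*(2*k*s) + a*s*x) by ring. lra. }
    lra.
Qed.

Lemma zero_core a b c th e z p K : 0<a -> 0<b -> 0<e -> e<=th -> c = th + e ->
  2*b >= c^2 -> a*e >= 2*b^2 -> z = e/b -> p = b^2/(a*e) -> K = (a*e-b^2)/b ->
  (forall x, 0 <= x -> b*x <= e -> 2*(e - b*x)*(th + K*x) <= b) ->
 is_equilibrium a b c th [(0,1-p);(z,p)] [(0,1-p);(z,p)] /\
 on_domain a b c [(0,1-p);(z,p)] [(0,1-p);(z,p)] /\
 mixed_profile [(0,1-p);(z,p)] [(0,1-p);(z,p)].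
Proof.
  intros ha hb he heth Hc Hbc Hae Hz Hp HK Hkey.
  assert (hae: 0 < a*e) by (apply Rmult_lt_0_compat; lra).
  assert (hz: 0 < z) by (rewrite Hz; apply Rdiv_lt_0_compat; lra).
  assert (hb2: 0 < b^2) by (apply pow_lt; lra).
  assert (hp0: 0 < p) by (rewrite Hp; apply Rdiv_lt_0_compat; lra).
  assert (hp1: p <= 1/2).
  { rewrite Hp. apply Rmult_le_reg_r with (a*e); [lra|]. unfold Rdiv. rewrite Rmult_assoc, Rinv_l by lra. lra. }
  assert (Hm1: (1-p)*0 + p*z = b/a) by (rewrite Hp, Hz; field; lra).
  assert (h2eth: 2*e*th <= b) by (pose proof (pow2_ge_0 (th - e)); nra).
  apply generic; try lra.
  - rewrite Hm1; field; lra.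
  - rewrite Hc, Hp, Hz; field; lra.
  - assert (E: Pc a b c 0 z = 1/2 - z*th) by (unfold Pc; rewrite Hc, Hz; field; lra).
    rewrite E. assert (0 < z*th) by (apply Rmult_lt_0_compat; lra).
    assert (z*th <= 1/2).
    { rewrite Hz. unfold Rdiv. apply Rmult_le_reg_r with b; [lra|].
      replace (e * / b * th * b) with (e*th) by (field; lra). lra. }
    lra.
  - intros x hx HP. rewrite Hm1. destruct (Rle_or_lt (b/a) x) as [hk|hk]; [nra|exfalso].
    assert (b*x <= b*(b/a)) by (apply Rmult_le_compat_l; lra).
    assert (b*(b/a) <= e/2).
    { replace (b*(b/a)) with (b^2/a) by (field; lra). apply Rmult_le_reg_r with (2*a); [lra|].
      replace (b^2/a*(2*a)) with (2*b^2) by (field; lra). lra. }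
    assert (E: Pc a b c x 0 = 1/2 + x*(c - b*x)) by (unfold Pc; ring).
    assert (0 <= x*(c - b*x)) by (apply Rmult_le_pos; lra). lra.
  - intros x hx HP. exfalso.
    assert (E: Pc a b c x z = 1/2 + (x - z)*(th + K*x)) by (unfold Pc; rewrite Hc, HK, Hz; field; lra).
    assert (hK: 0 <= K).
    { rewrite HK. apply Rmult_le_reg_r with b; [lra|]. unfold Rdiv. rewrite Rmult_assoc, Rinv_l by lra. lra. }
    assert (0 <= K*x) by (apply Rmult_le_pos; lra).
    destruct (Rle_or_lt z x) as [hk|hk].
    + assert (0 <= (x-z)*(th+K*x)) by (apply Rmult_le_pos; lra). lra.
    + assert (b*x <= e).
      { rewrite Hz in hk. apply Rmult_lt_compat_l with (r:=b) in hk; [|lra].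
        replace (b*(e/b)) with e in hk by (field; lra). lra. }
      specialize (Hkey x hx H0).
      assert (E2: (x - z)*(th + K*x) = - ((e - b*x)*(th + K*x)) / b) by (rewrite Hz; field; lra).
      assert ((e - b*x)*(th + K*x) <= b/2) by lra.
      assert (- ((e - b*x)*(th + K*x)) / b >= - (1/2)).
      { unfold Rdiv. apply Rle_ge. apply Rmult_le_reg_r with b; [lra|].
        rewrite Rmult_assoc, Rinv_l by lra. lra. }
      lra.
Qed.

Lemma key_zero b e th K : 0<b -> 0<e -> 0 < th -> 2*e*th <= b -> 0 <= K ->
  ((K*e + b*th)^2 <= 2*K*b^2 \/ K*e <= th*b) ->
  forall x, 0 <= x -> b*x <= e -> 2*(e - b*x)*(th + K*x) <= b.
Proof.
  intros hb he hth h2 hK [H|H] x hx hbx.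
  - destruct (Req_dec K 0) as [->|hK0].
    + assert (0 < b*th) by (apply Rmult_lt_0_compat; lra).
      assert (0 < (0*e + b*th)^2) by (apply pow_lt; lra). lra.
    + assert (0 < K*b) by (apply Rmult_lt_0_compat; lra).
      pose proof (pow2_ge_0 (K*(e-b*x) - b*(th+K*x))).
      assert (4*(K*b)*((e - b*x)*(th + K*x)) <= (K*e+b*th)^2) by nra.
      assert (4*(K*b)*((e - b*x)*(th + K*x)) <= (K*b)*(2*b)) by nra.
      assert ((e - b*x)*(th + K*x) <= b/2).
      { apply Rmult_le_reg_l with (4*(K*b)); [lra|]. nra. }
      lra.
  - assert (0 <= b*K*x^2) by (apply Rmult_le_pos; [apply Rmult_le_pos; lra|apply pow2_ge_0]).
    assert (x*(K*e - b*th) <= 0).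
    { assert (0 <= x*(b*th - K*e)) by (apply Rmult_le_pos; lra). nra. }
    replace (2*(e - b*x)*(th + K*x)) with (2*(e*th + x*(K*e - b*th) - b*K*x^2)) by ring.
    lra.
Qed.

Lemma abar_to_key b e th K S : 0<b -> 0<e -> 0<th -> 2*e*th <= b -> 0 <= S ->
  S^2 = b*(b-2*e*th) -> e^2*K <= b^2 - e*th*b + S*b -> K*e > th*b ->
  (K*e + b*th)^2 <= 2*K*b^2.
Proof.
  intros hb he hth h2 hS HS HU HK.
  assert (Sge: b - 2*e*th <= S).
  { destruct (Rle_or_lt (b - 2*e*th) S) as [h|h]; auto.
    assert (S^2 < (b-2*e*th)^2).
    { assert (0 <= S*S) by nra. simpl. nra. }
    assert ((b-2*e*th)^2 <= b*(b-2*e*th)).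
    { assert (0 <= b - 2*e*th) by lra. assert (0 <= e*th) by (apply Rmult_le_pos; lra). nra. }
    lra. }
  set (U := e^2*K - b^2 + e*th*b).
  assert (U1: U <= S*b) by (unfold U; lra).
  assert (U2: - (S*b) <= U).
  { unfold U. assert (e*(K*e) >= e*(th*b)) by (apply Rle_ge, Rmult_le_compat_l; lra).
    assert (S*b >= (b - 2*e*th)*b) by (apply Rle_ge, Rmult_le_compat_r; lra). nra. }
  assert (U^2 <= (S*b)^2).
  { assert (0 <= S*b) by (apply Rmult_le_pos; lra). nra. }
  assert (E: (S*b)^2 = b^3*(b - 2*e*th)) by (rewrite Rpow_mult_distr, HS; ring).
  assert (e^2*((K*e + b*th)^2) <= e^2*(2*K*b^2)).
  { unfold U in *. nra. }
  assert (0 < e^2) by (apply pow_lt; lra).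
  apply Rmult_le_reg_l with (e^2); auto.
Qed.

Theorem proposition3 (b c th : R)
  (hb : 0 < b) (hc : 0 < c) (hth : 0 < th)
  (hc1 : th < c) (hc2 : c <= 2 * th) (hbc : b >= c ^ 2 / 2) :
  abarM b c th >= 2 * b ^ 2 / (c - th) /\
  (forall a : R, 0 < a -> zeta a b c th < 0 -> a <= abarM b c th ->
     (exists dX dY, is_equilibrium a b c th dX dY /\ on_domain a b c dX dY
                    /\ mixed_profile dX dY) /\
     (a <= 2 * b ^ 2 / (c - th) ->
        is_equilibrium a b c th (sym_dist a b c th) (sym_dist a b c th) /\
        on_domain a b c (sym_dist a b c th) (sym_dist a b c th) /\
        mixed_profile (sym_dist a b c th) (sym_dist a b c th)) /\
     (a >= 2 * b ^ 2 / (c - th) ->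
        is_equilibrium a b c th (zero_dist a b c th) (zero_dist a b c th) /\
        on_domain a b c (zero_dist a b c th) (zero_dist a b c th) /\
        mixed_profile (zero_dist a b c th) (zero_dist a b c th))) /\
  (exists a : R, 0 < a /\ zeta a b c th < 0 /\
     exists dX dY, is_equilibrium a b c th dX dY /\ on_domain a b c dX dY
                   /\ mixed_profile dX dY).
Proof.
  set (e := c - th).
  assert (he : 0 < e) by (unfold e; lra).
  assert (heth : e <= th) by (unfold e; lra).
  assert (Hc : c = th + e) by (unfold e; ring).
  assert (Hbc : 2*b >= c^2) by lra.
  assert (h2 : 2*e*th <= b) by (rewrite Hc in Hbc; pose proof (pow2_ge_0 (th - e)); nra).
  set (S := sqrt (b * (b - 2 * c * th + 2 * th ^ 2))).
  assert (HSarg : b * (b - 2 * c * th + 2 * th ^ 2) = b*(b - 2*e*th)) by (unfold e; ring).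
  assert (hS : 0 <= S) by apply sqrt_pos.
  assert (HS2 : S^2 = b*(b - 2*e*th)).
  { unfold S. rewrite HSarg. simpl. rewrite Rmult_1_r. apply sqrt_sqrt.
    apply Rmult_le_pos; lra. }
  assert (HN : b + c ^ 2 - 3 * c * th + 2 * th ^ 2 + S = b + e^2 - e*th + S) by (rewrite Hc; ring).
  assert (he3 : 0 < e^3) by (apply pow_lt; lra).
  assert (Habar : abarM b c th = (b + e^2 - e*th + S) * b^2 / e^3).
  { unfold abarM. fold S. rewrite HN. fold e. reflexivity. }
  assert (P1 : abarM b c th >= 2 * b ^ 2 / e).
  { rewrite Habar. assert (2*e^2 <= b + e^2 - e*th + S).
    { assert (e*e <= e*th) by (apply Rmult_le_compat_l; lra). simpl. nra. }
    replace (2*b^2/e) with (2*e^2*b^2/e^3) by (field; lra).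
    apply Rle_ge. unfold Rdiv. apply Rmult_le_compat_r.
    - left; apply Rinv_0_lt_compat; auto.
    - apply Rmult_le_compat_r; [apply pow2_ge_0|lra]. }
  assert (P2 : forall a : R, 0 < a -> zeta a b c th < 0 -> a <= abarM b c th ->
     (a <= 2 * b ^ 2 / e ->
        is_equilibrium a b c th (sym_dist a b c th) (sym_dist a b c th) /\
        on_domain a b c (sym_dist a b c th) (sym_dist a b c th) /\
        mixed_profile (sym_dist a b c th) (sym_dist a b c th)) /\
     (a >= 2 * b ^ 2 / e ->
        is_equilibrium a b c th (zero_dist a b c th) (zero_dist a b c th) /\
        on_domain a b c (zero_dist a b c th) (zero_dist a b c th) /\
        mixed_profile (zero_dist a b c th) (zero_dist a b c th))).
  { intros a ha hz haM.
    assert (ha2 : 0 < a^2) by (apply pow_lt; lra).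
    assert (hzeta : zeta a b c th = (b^2 - a*e)/a^2) by reflexivity.
    assert (hlt : b^2 < a*e).
    { rewrite hzeta in hz. unfold Rdiv in hz.
      assert ((b^2 - a*e) * /a^2 * a^2 < 0 * a^2) by (apply Rmult_lt_compat_r; lra).
      rewrite Rmult_assoc, Rinv_l in H by lra. lra. }
    split.
    - intros hsm.
      assert (hae2 : a*e <= 2*b^2).
      { apply Rmult_le_compat_r with (r:=e) in hsm; [|lra].
        replace (2*b^2/e*e) with (2*b^2) in hsm by (field; lra). lra. }
      set (k := b/a). set (s := sqrt (- zeta a b c th)).
      assert (Hs2 : s^2 = (a*e - b^2)/a^2).
      { unfold s. simpl. rewrite Rmult_1_r, sqrt_sqrt by lra. rewrite hzeta. field. lra. }
      assert (hs : 0 < s) by (unfold s; apply sqrt_lt_R0; lra).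
      assert (hk : 0 < k) by (unfold k; apply Rdiv_lt_0_compat; lra).
      assert (hsk2 : s^2 <= k^2).
      { rewrite Hs2. unfold k. replace ((b/a)^2) with (b^2/a^2) by (field; lra).
        unfold Rdiv. apply Rmult_le_compat_r; [left; apply Rinv_0_lt_compat; lra | lra]. }
      assert (hsk : s <= k).
      { destruct (Rle_or_lt s k) as [h|h]; auto.
        assert (k*k < s*s) by (apply Rmult_le_0_lt_compat; lra). simpl in hsk2. lra. }
      assert (Hb' : b = a*k) by (unfold k; field; lra).
      assert (Hek : a*(k^2+s^2) = e).
      { rewrite Hs2. unfold k. field. lra. }
      replace (sym_dist a b c th) with [(k-s,1/2);(k+s,1/2)] by reflexivity.
      apply sym_core; auto; lra.
    - intros hge.
      assert (hae2 : a*e >= 2*b^2).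
      { apply Rge_le in hge. apply Rmult_le_compat_r with (r:=e) in hge; [|lra].
        replace (2*b^2/e*e) with (2*b^2) in hge by (field; lra). lra. }
      replace (zero_dist a b c th) with [(0, 1 - b^2/(a*e)); (e/b, b^2/(a*e))] by reflexivity.
      apply zero_core with (e := e) (K := (a*e - b^2)/b); auto; try lra.
      set (K := (a*e - b^2)/b).
      assert (hK : 0 <= K) by (unfold K; unfold Rdiv; apply Rmult_le_pos; [lra|left; apply Rinv_0_lt_compat; lra]).
      apply key_zero; auto.
      destruct (Rle_or_lt (K*e) (th*b)) as [h|h]; [right; auto|left].
      apply abar_to_key with S; auto; try lra.
      rewrite Habar in haM.
      assert (a*e^3 <= (b + e^2 - e*th + S) * b^2).
      { apply Rmult_le_compat_r with (r:=e^3) in haM; [|lra].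
        replace ((b + e^2 - e*th + S) * b^2 / e^3 * e^3) with ((b + e^2 - e*th + S) * b^2) in haM by (field; lra).
        lra. }
      replace (e^2*K) with ((a*e^3 - e^2*b^2)/b) by (unfold K; field; lra).
      apply Rmult_le_reg_r with b; auto.
      replace ((a*e^3 - e^2*b^2)/b*b) with (a*e^3 - e^2*b^2) by (field; lra).
      nra. }
  split; [exact P1|split].
  - intros a ha hz haM. destruct (P2 a ha hz haM) as [Hs Hz].
    split; [|split; auto].
    destruct (Rle_or_lt a (2*b^2/e)) as [h|h].
    + exists (sym_dist a b c th), (sym_dist a b c th). auto.
    + exists (zero_dist a b c th), (zero_dist a b c th). apply Hz; lra.
  - exists (2*b^2/e).
    assert (ha : 0 < 2*b^2/e) by (apply Rdiv_lt_0_compat; [apply Rmult_lt_0_compat; [lra|apply pow_lt; lra]|lra]).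
    assert (hz : zeta (2*b^2/e) b c th < 0).
    { unfold zeta. fold e. replace (b ^ 2 - 2 * b ^ 2 / e * e) with (- b^2) by (field; lra).
      unfold Rdiv. assert (0 < b^2) by (apply pow_lt; lra). assert (0 < / (2*b^2/e)^2) by (apply Rinv_0_lt_compat, pow_lt; lra). nra. }
    split; [auto|split; [auto|]].
    destruct (P2 _ ha hz (Rge_le _ _ P1)) as [Hs _].
    exists (sym_dist (2*b^2/e) b c th), (sym_dist (2*b^2/e) b c th). apply Hs; lra.
Qed.
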